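(* Let $\mathcal{E}'$ be any function mapping a pair consisting of an $\mathcal{ALC}$-formula and an interpretation to an $\mathcal{ALC}$-formula. Then $\mathcal{E}'(\varphi,M)\equiv\mathcal{E}(\varphi,M)$ for every $\mathcal{ALC}$-formula $\varphi$ and every interpretation $M$ (with $\mathcal{E}$ the finite base model expansion defined in the context) if and only if $\mathcal{E}'$ satisfies, for every $\varphi$ and $M$: (success) $M\in\mathrm{Mod}(\mathcal{E}'(\varphi,M))$; (persistence) $\mathrm{Mod}(\varphi)\subseteq\mathrm{Mod}(\mathcal{E}'(\varphi,M))$; (atomic temperance) for every set $\mathbb{M}'$ of interpretations, if $\mathrm{Mod}(\varphi)\cup[M]_\varphi\subseteq\mathbb{M}'\subsetneq\mathrm{Mod}(\mathcal{E}'(\varphi,M))\cup\{M\}$, then $\mathbb{M}'$ is not finitely representable in $\mathcal{ALC}$-formula; (atomic extensionality) for every interpretation $M'$, if $M'\equiv_\varphi M$ then $\mathrm{Mod}(\mathcal{E}'(\varphi,M))=\mathrm{Mod}(\mathcal{E}'(\varphi,M'))$.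
   Context: Syntax: $N_C,N_R,N_I$ are pairwise disjoint countably infinite sets of concept, role and individual names. $\mathcal{ALC}$ concepts: $C::=A\mid \neg C\mid (C\sqcap C)\mid \exists r.C$; $\top,\sqcup$ usual abbreviations. $\mathcal{ALC}$-formulae: $\phi::=\alpha\mid\neg\phi\mid(\phi\wedge\phi)$ with atomic $\alpha::=C(a)\mid r(a,b)\mid(C=\top)$; $\vee$ is the usual abbreviation; $\neg\neg\psi$ is identified with $\psi$. A literal is an atomic formula or its negation. Interpretations $I=(\Delta^I,\cdot^I)$ (countable nonempty domain, interpreting concept, role and individual names) with the standard semantics; $I\models C(a)$ iff $a^I\in C^I$, $I\models r(a,b)$ iff $(a^I,b^I)\in r^I$, $I\models(C=\top)$ iff $C^I=\Delta^I$, $\neg,\wedge$ classical. $\mathrm{Mod}(\varphi)$ is the set of interpretations satisfying $\varphi$; $\varphi\equiv\psi$ iff $\mathrm{Mod}(\varphi)=\mathrm{Mod}(\psi)$. A set of interpretations is finitely representable in $\mathcal{ALC}$-formula if it equals $\mathrm{Mod}$ of a finite set of $\mathcal{ALC}$-formulae. $\mathrm{Sub}(\alpha)=\mathrm{Sub}(\neg\alpha)=\{\alpha,\neg\alpha\}$ for atomic $\alpha$; $\mathrm{Sub}(\psi\wedge\psi')=\mathrm{Sub}(\neg(\psi\wedge\psi'))=\{\psi\wedge\psi',\neg(\psi\wedge\psi')\}\cup\mathrm{Sub}(\psi)\cup\mathrm{Sub}(\psi')$. $\mathrm{con}(\varphi)$ is the smallest concept set containing $C$ whenever $(C=\top)$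 or $C(a)$ is in $\mathrm{Sub}(\varphi)$, closed under taking conjuncts of $C\sqcap D$, under $\exists r.C\mapsto C$, and under single negation. For an interpretation $I$, $\mathrm{qm}(\varphi,I)=(T,o,f)$ where $T=\{c(x)\mid x\in\Delta^I\}$, $c(x)=\{C\in\mathrm{con}(\varphi)\mid x\in C^I\}$, $o(a)=c(a^I)$ for individuals $a$ of $\varphi$, and $f=\{\psi\in\mathrm{Sub}(\varphi)\mid I\models\psi\}$; $\mathrm{lit}(f)$ is the set of literals in $f$. The finite base model expansion is $\mathcal{E}(\varphi,M)=\varphi$ if $M\models\varphi$, and $\mathcal{E}(\varphi,M)=\varphi\vee\bigwedge\mathrm{lit}(f)$ otherwise, where $\mathrm{qm}(\neg\varphi,M)=(T,o,f)$. $\mathcal{L}_{lit}(\varphi)$ is the set of Boolean combinations of atomic formulae occurring in $\varphi$; $M\equiv_\varphi M'$ iff $M$ and $M'$ satisfy the same formulae of $\mathcal{L}_{lit}(\varphi)$; $[M]_\varphi=\{M'\mid M'\equiv_\varphi M\}$. *)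

(* Defs.v *)
From Stdlib Require Import List ClassicalEpsilon.
Import ListNotations.

(* Concept, role and individual names: three separate copies of nat
   (pairwise disjoint, countably infinite). *)
Definition cname := nat.
Definition rname := nat.
Definition iname := nat.

Inductive concept : Type :=
| CName : cname -> concept
| CNeg  : concept -> concept
| CAnd  : concept -> concept -> concept
| CEx   : rname -> concept -> concept.

Definition CTop : concept := CNeg (CAnd (CName 0) (CNeg (CName 0))).

Definition cneg (C : concept) : concept :=
  match C with CNeg D => D | _ => CNeg C end.

Inductive atom : Type :=
| ACAss : concept -> iname -> atom
| ARAss : rname -> iname -> iname -> atom
| ATBox : concept -> atom.                    (* C = T *)

Inductive formula : Type :=
| FAtom : atom -> formula
| FNeg  : formula -> formula
| FAnd  : formula -> formula -> formula.

Definition fneg (p : formula) : formula :=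
  match p with FNeg q => q | _ => FNeg p end.

Definition FOr (p q : formula) : formula := fneg (FAnd (fneg p) (fneg q)).

Record Interp : Type := {
  dom : Type;
  dom_inh : dom;
  dom_countable : exists f : dom -> nat, forall x y, f x = f y -> x = y;
  cI : cname -> dom -> Prop;
  rI : rname -> dom -> dom -> Prop;
  iI : iname -> dom
}.

Fixpoint cinterp (I : Interp) (C : concept) : dom I -> Prop :=
  match C with
  | CName A => cI I A
  | CNeg D => fun x => ~ cinterp I D x
  | CAnd D E => fun x => cinterp I D x /\ cinterp I E x
  | CEx r D => fun x => exists y, rI I r x y /\ cinterp I D y
  end.

Definition asat (I : Interp) (a : atom) : Prop :=
  match a with
  | ACAss C i => cinterp I C (iI I i)
  | ARAss r i j => rI I r (iI I i) (iI I j)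
  | ATBox C => forall x, cinterp I C x
  end.

Fixpoint sat (I : Interp) (p : formula) : Prop :=
  match p with
  | FAtom a => asat I a
  | FNeg q => ~ sat I q
  | FAnd q r => sat I q /\ sat I r
  end.

Definition iset := Interp -> Prop.

Definition Mod (p : formula) : iset := fun I => sat I p.

Definition equiv (p q : formula) : Prop := forall I, Mod p I <-> Mod q I.

Definition iset_eq (S T : iset) : Prop := forall I, S I <-> T I.
Definition iset_sub (S T : iset) : Prop := forall I, S I -> T I.
Definition iset_ssub (S T : iset) : Prop := iset_sub S T /\ exists I, T I /\ ~ S I.
Definition iset_union (S T : iset) : iset := fun I => S I \/ T I.
Definition iset_single (M : Interp) : iset := fun I => I = M.

Definition ModL (G : list formula) : iset := fun I => forall p, In p G -> sat I p.

Definition fin_rep (S : iset) : Prop := exists G : list formula, iset_eq S (ModL G).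

(* Sub(phi), as a list; Sub(~psi) = Sub(psi) (with ~~psi identified with psi) *)
Fixpoint Sub (p : formula) : list formula :=
  match p with
  | FAtom a => [FAtom a; FNeg (FAtom a)]
  | FNeg q => Sub q
  | FAnd q r => FAnd q r :: FNeg (FAnd q r) :: Sub q ++ Sub r
  end.

Inductive con (p : formula) : concept -> Prop :=
| con_tbox : forall C, In (FAtom (ATBox C)) (Sub p) -> con p C
| con_cass : forall C a, In (FAtom (ACAss C a)) (Sub p) -> con p C
| con_andl : forall C D, con p (CAnd C D) -> con p C
| con_andr : forall C D, con p (CAnd C D) -> con p D
| con_ex   : forall r C, con p (CEx r C) -> con p C
| con_neg  : forall C, con p C -> con p (cneg C).

Definition decP (P : Prop) : bool :=
  if excluded_middle_informative P then true else false.

Definition qm_c (p : formula) (I : Interp) (x : dom I) : concept -> Prop :=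
  fun C => con p C /\ cinterp I C x.

Record qmodel : Type := {
  qm_T : (concept -> Prop) -> Prop;
  qm_o : iname -> (concept -> Prop);
  qm_f : list formula
}.

Fixpoint atoms_of (p : formula) : list atom :=
  match p with
  | FAtom a => [a]
  | FNeg q => atoms_of q
  | FAnd q r => atoms_of q ++ atoms_of r
  end.

Definition qm (p : formula) (I : Interp) : qmodel := {|
  qm_T := fun S => exists x : dom I, S = qm_c p I x;
  (* o(a) = c(a^I); only its values on individuals of p are relevant *)
  qm_o := fun a => qm_c p I (iI I a);
  qm_f := filter (fun q => decP (sat I q)) (Sub p)
|}.

Definition is_literal (p : formula) : bool :=
  match p with
  | FAtom _ => true
  | FNeg (FAtom _) => true
  | _ => false
  end.

Definition lit (f : list formula) : list formula := filter is_literal f.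

(* finite conjunction (the lists used are nonempty; [] gives T = T) *)
Fixpoint bigAnd (l : list formula) : formula :=
  match l with
  | [] => FAtom (ATBox CTop)
  | [p] => p
  | p :: l' => FAnd p (bigAnd l')
  end.

Definition Efbm (p : formula) (M : Interp) : formula :=
  if decP (sat M p) then p
  else FOr p (bigAnd (lit (qm_f (qm (fneg p) M)))).

Definition in_Llit (p q : formula) : Prop :=
  forall a, In a (atoms_of q) -> In a (atoms_of p).

Definition lit_equiv (p : formula) (M M' : Interp) : Prop :=
  forall q, in_Llit p q -> (sat M q <-> sat M' q).

Definition lit_class (p : formula) (M : Interp) : iset := fun M' => lit_equiv p M' M.

(* Main.v *)
Require Import Defs.
From Stdlib Require Import List ClassicalEpsilon Classical.
Import ListNotations.

Lemma decP_true (P : Prop) : decP P = true <-> P.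
Proof. unfold decP; destruct (excluded_middle_informative P); split; congruence || tauto. Qed.

Lemma sat_fneg I p : sat I (fneg p) <-> ~ sat I p.
Proof. destruct p; simpl; try tauto. all: split; [intros H1 H2; tauto| apply NNPP]. Qed.

Lemma sat_FOr I p q : sat I (FOr p q) <-> sat I p \/ sat I q.
Proof.
  unfold FOr. rewrite sat_fneg. simpl. rewrite !sat_fneg.
  split; [intro H; apply NNPP; tauto | tauto].
Qed.

Lemma sat_bigAnd I l : sat I (bigAnd l) <-> forall q, In q l -> sat I q.
Proof.
  induction l as [|p l IH]; simpl.
  - split; [intros _ q []| intros _ x H; simpl in H; tauto].
  - destruct l as [|p' l'].
    + split; [intros H q [<-|[]]; exact H| intros H; apply H; auto].
    + change (sat I p /\ sat I (bigAnd (p' :: l')) <-> (forall q, p = q \/ In q (p' :: l') -> sat I q)).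
      rewrite IH. split; [intros [H1 H2] q [<-|Hq]; auto | intros H; split; auto].
Qed.

Lemma Sub_fneg p : Sub (fneg p) = Sub p.
Proof. destruct p; reflexivity. Qed.

Lemma Sub_atoms p q : In q (Sub p) -> incl (atoms_of q) (atoms_of p).
Proof.
  induction p as [a|p IH|p1 IH1 p2 IH2]; simpl; intro H.
  - destruct H as [<-|[<-|[]]]; simpl; apply incl_refl.
  - auto.
  - destruct H as [<-|[<-|H]]; simpl; try apply incl_refl.
    apply in_app_or in H as [H|H].
    + eapply incl_tran; [apply IH1, H| apply incl_appl, incl_refl].
    + eapply incl_tran; [apply IH2, H| apply incl_appr, incl_refl].
Qed.

Lemma atoms_Sub p a : In a (atoms_of p) -> In (FAtom a) (Sub p) /\ In (FNeg (FAtom a)) (Sub p).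
Proof.
  induction p as [b|p IH|p1 IH1 p2 IH2]; simpl; intro H.
  - destruct H as [<-|[]]; auto.
  - auto.
  - apply in_app_or in H as [H|H].
    + destruct (IH1 H); split; right; right; apply in_or_app; auto.
    + destruct (IH2 H); split; right; right; apply in_or_app; auto.
Qed.

Lemma sat_atoms I J q : (forall a, In a (atoms_of q) -> (asat I a <-> asat J a)) -> (sat I q <-> sat J q).
Proof.
  induction q as [a|q IH|q1 IH1 q2 IH2]; simpl; intro H.
  - apply H; auto.
  - rewrite IH; tauto.
  - rewrite IH1, IH2; [tauto| |]; intros a Ha; apply H; apply in_or_app; auto.
Qed.

Lemma lit_part p M I : ~ sat M p ->
  (sat I (bigAnd (lit (qm_f (qm (fneg p) M)))) <-> lit_equiv p I M).
Proof.
  intro HM. rewrite sat_bigAnd. simpl. rewrite Sub_fneg. unfold lit. split.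
  - intros H q Hq. apply sat_atoms. intros a Ha. apply Hq in Ha.
    destruct (atoms_Sub p a Ha) as [H1 H2].
    destruct (classic (asat M a)) as [Ma|Ma].
    + assert (asat I a); [|tauto]. apply (H (FAtom a)).
      apply filter_In; split; [|reflexivity]. apply filter_In; split; auto.
      apply (proj2 (decP_true _)); exact Ma.
    + assert (~ asat I a); [|tauto]. apply (H (FNeg (FAtom a))).
      apply filter_In; split; [|reflexivity]. apply filter_In; split; auto.
      apply (proj2 (decP_true _)); exact Ma.
  - intros H q Hq. apply filter_In in Hq as [Hq _]. apply filter_In in Hq as [Hq Hs].
    apply (proj1 (decP_true _)) in Hs. apply (H q); auto. intros a Ha. exact (Sub_atoms p q Hq a Ha).
Qed.

Lemma Mod_Efbm p M I : Mod (Efbm p M) I <-> sat I p \/ lit_equiv p I M.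
Proof.
  unfold Mod, Efbm. destruct (decP (sat M p)) eqn:E.
  - apply (proj1 (decP_true _)) in E. split; [tauto|]. intros [H|H]; auto.
    apply (H p); auto. intros a Ha; exact Ha.
  - assert (~ sat M p) by (intro H; apply (proj2 (decP_true _)) in H; congruence).
    rewrite sat_FOr, lit_part; tauto.
Qed.

Lemma lit_equiv_refl p M : lit_equiv p M M.
Proof. intros q _; tauto. Qed.

Theorem mainTheorem2 (E' : formula -> Interp -> formula) :
  (forall (phi : formula) (M : Interp), equiv (E' phi M) (Efbm phi M))
  <->
  (forall (phi : formula) (M : Interp),
     Mod (E' phi M) M /\
     iset_sub (Mod phi) (Mod (E' phi M)) /\
     (forall M' : iset,
        iset_sub (iset_union (Mod phi) (lit_class phi M)) M' ->
        iset_ssub M' (iset_union (Mod (E' phi M)) (iset_single M)) ->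
        ~ fin_rep M') /\
     (forall M' : Interp, lit_equiv phi M' M ->
        iset_eq (Mod (E' phi M)) (Mod (E' phi M')))).
Proof.
  split.
  - intros HE phi M. unfold equiv in HE.
    split; [|split; [|split]].
    + apply HE, Mod_Efbm. right; apply lit_equiv_refl.
    + intros I H. apply HE, Mod_Efbm. left; exact H.
    + intros S Hsub [_ [I [HI HnI]]] _. apply HnI, Hsub.
      destruct HI as [HI|HI].
      * apply HE, Mod_Efbm in HI. exact HI.
      * unfold iset_single in HI; subst. right; apply lit_equiv_refl.
    + intros M' HM' I. rewrite !HE, !Mod_Efbm.
      assert (forall J, lit_equiv phi J M <-> lit_equiv phi J M') as K.
      { intro J; split; intros H q Hq; specialize (H q Hq); specialize (HM' q Hq); tauto. }
      rewrite K; tauto.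
  - intros H phi M I. destruct (H phi M) as [Hs [Hp [Ht Hx]]].
    split.
    + intro HI. apply Mod_Efbm. apply NNPP; intro Hn.
      apply (Ht (fun J => sat J phi \/ lit_equiv phi J M)).
      * intros J HJ; exact HJ.
      * split.
        -- intros J [HJ|HJ]; left.
           ++ apply Hp, HJ.
           ++ apply (Hx J HJ). exact (proj1 (H phi J)).
        -- exists I; split; [left; exact HI| exact Hn].
      * exists [Efbm phi M]. intro J. rewrite <- Mod_Efbm. unfold ModL. simpl.
        split; [intros HJ q [<-|[]]; exact HJ| intros HJ; apply HJ; auto].
    + intro HI. apply Mod_Efbm in HI as [HI|HI].
      * apply Hp, HI.
      * apply (Hx I HI). exact (proj1 (H phi I)).
Qed.
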